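(* Let $m\in\{1,2\}$, $K>0$, $\gamma=3$, and let $(\rho,u)$ be a smooth solution ($\rho>0$, $r>0$) of the radially symmetric isentropic Euler equations $$(r^m\rho)_t+(r^m\rho u)_r=0,\qquad (r^m\rho u)_t+(r^m\rho u^2)_r+r^m p_r=0,\qquad p=K\rho^\gamma,$$ in the subsonic regime $c_1<0<c_2$. Then: (i) if the 1-wave is rarefaction (R), the 2-wave can only change from compression (C) to R; (ii) if the 1-wave is C, the 2-wave can only change from R to C; (iii) if the 2-wave is R, the 1-wave can only change from R to C; (iv) if the 2-wave is C, the 1-wave can only change from C to R.
   Context: Here $h=\sqrt{K\gamma}\,\rho^{(\gamma-1)/2}$, $c_1=u-h$, $c_2=u+h$, and $$\alpha=u_r+\tfrac{2}{\gamma-1}h_r+\tfrac{m}{r}\tfrac{hu}{c_2},\qquad \beta=u_r-\tfrac{2}{\gamma-1}h_r-\tfrac{m}{r}\tfrac{hu}{c_1}.$$ The 1-wave is rarefaction (compression) at a point if $\beta>0$ ($\beta<0$); the 2-wave is rarefaction (compression) if $\alpha>0$ ($\alpha<0$). Characteristic flow maps: $\partial_t\xi(r_0,t)=c_1(\xi(r_0,t),t)$, $\partial_t\psi(r_0,t)=c_2(\psi(r_0,t),t)$, $\xi(r_0,0)=\psi(r_0,0)=r_0$. A change of the 2-wave from R to C means there are $r_0,t^*,\varepsilon>0$ such that $g(t)=\alpha(\psi(r_0,t),t)$ satisfies $g(t^* )=0$, $g>0$ on $(t^*-\varepsilon,t^* )$, $g<0$ on $(t^*,t^*+\varepsilon)$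 (from C to R: opposite signs); a change of the 1-wave is defined likewise with $\beta(\xi(r_0,t),t)$. ''If the 1-wave is R then the 2-wave can only change from C to R'' means no R-to-C change of the 2-wave occurs at a time $t^*$ where the 1-wave is R at the crossing point; the other items are interpreted analogously. *)

(* Defs.v *)
From Stdlib Require Import Reals Lra.
From Coquelicot Require Import Coquelicot.
Open Scope R_scope.

Definition d_r (f : R -> R -> R) (r t : R) : R := Derive (fun s => f s t) r.
Definition d_t (f : R -> R -> R) (r t : R) : R := Derive (fun s => f r s) t.

Fixpoint Ck_on (D : R -> R -> Prop) (k : nat) (f : R -> R -> R) : Prop :=
  (forall r t, D r t -> continuous (fun p : R * R => f (fst p) (snd p)) (r, t)) /\
  match k with
  | O => True
  | S k' =>
      (forall r t, D r t -> ex_derive (fun s => f s t) r /\ ex_derive (fun s => f r s) t)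
      /\ Ck_on D k' (d_r f) /\ Ck_on D k' (d_t f)
  end.

Definition smooth_on (D : R -> R -> Prop) (f : R -> R -> R) : Prop :=
  forall k, Ck_on D k f.

Definition region (T : R) (r t : R) : Prop := 0 < r /\ 0 < t < T.

Definition pressure (K gamma : R) (rho : R -> R -> R) (r t : R) : R :=
  K * Rpower (rho r t) gamma.
Definition hh (K gamma : R) (rho : R -> R -> R) (r t : R) : R :=
  sqrt (K * gamma) * Rpower (rho r t) ((gamma - 1) / 2).
Definition cc1 (K gamma : R) (rho u : R -> R -> R) (r t : R) : R :=
  u r t - hh K gamma rho r t.
Definition cc2 (K gamma : R) (rho u : R -> R -> R) (r t : R) : R :=
  u r t + hh K gamma rho r t.

Definition alpha (m : nat) (K gamma : R) (rho u : R -> R -> R) (r t : R) : R :=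
  d_r u r t + 2 / (gamma - 1) * d_r (hh K gamma rho) r t
  + INR m / r * (hh K gamma rho r t * u r t / cc2 K gamma rho u r t).
Definition beta (m : nat) (K gamma : R) (rho u : R -> R -> R) (r t : R) : R :=
  d_r u r t - 2 / (gamma - 1) * d_r (hh K gamma rho) r t
  - INR m / r * (hh K gamma rho r t * u r t / cc1 K gamma rho u r t).

Definition euler_radial (D : R -> R -> Prop) (m : nat) (K gamma : R)
    (rho u : R -> R -> R) : Prop :=
  forall r t, D r t ->
    d_t (fun s τ => s ^ m * rho s τ) r t
      + d_r (fun s τ => s ^ m * rho s τ * u s τ) r t = 0 /\
    d_t (fun s τ => s ^ m * rho s τ * u s τ) r t
      + d_r (fun s τ => s ^ m * rho s τ * (u s τ) ^ 2) r t
      + r ^ m * d_r (pressure K gamma rho) r t = 0.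

Definition char_curve (T : R) (c : R -> R -> R) (r0 : R) (psi : R -> R) : Prop :=
  psi 0 = r0 /\
  (forall t, 0 <= t < T -> 0 < psi t) /\
  (forall t, 0 <= t < T -> continuity_pt psi t) /\
  (forall t, 0 < t < T -> is_derive psi t (c (psi t) t)).

Definition change_pos_to_neg (g : R -> R) (tstar eps : R) : Prop :=
  g tstar = 0 /\
  (forall t, tstar - eps < t < tstar -> g t > 0) /\
  (forall t, tstar < t < tstar + eps -> g t < 0).
Definition change_neg_to_pos (g : R -> R) (tstar eps : R) : Prop :=
  g tstar = 0 /\
  (forall t, tstar - eps < t < tstar -> g t < 0) /\
  (forall t, tstar < t < tstar + eps -> g t > 0).

(* Main.v *)
Require Import Defs.
From Stdlib Require Import Reals Lra.
From Coquelicot Require Import Coquelicot.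
Open Scope R_scope.

Lemma Ck_ex_diff (D : R -> R -> Prop) (k : nat) : forall f, Ck_on D k f ->
  forall r t, D r t -> ex_diff_n f k r t.
Proof.
  induction k as [|k IH]; intros f Hf r t HD; simpl in Hf |- *.
  - split; [|exact I]. apply continuity_2d_pt_filterlim. apply (proj1 Hf r t HD).
  - destruct Hf as [Hc [He [Hr Ht]]].
    split; [apply continuity_2d_pt_filterlim; apply (Hc r t HD)|].
    destruct (He r t HD) as [E1 E2].
    split; [exact E1|]. split; [exact E2|]. split.
    + exact (IH _ Hr r t HD).
    + exact (IH _ Ht r t HD).
Qed.

Lemma smooth_dr D f : smooth_on D f -> smooth_on D (d_r f).
Proof. intros H k. exact (proj1 (proj2 (proj2 (H (S k))))). Qed.
Lemma smooth_dt D f : smooth_on D f -> smooth_on D (d_t f).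
Proof. intros H k. exact (proj2 (proj2 (proj2 (H (S k))))). Qed.
Lemma smooth_exd D f r t : smooth_on D f -> D r t ->
  ex_derive (fun s => f s t) r /\ ex_derive (fun s => f r s) t.
Proof. intros H HD. exact (proj1 (proj2 (H 1%nat)) r t HD). Qed.
Lemma smooth_cont D f r t : smooth_on D f -> D r t -> continuity_2d_pt f r t.
Proof. intros H HD. apply continuity_2d_pt_filterlim. exact (proj1 (H 0%nat) r t HD). Qed.
Lemma smooth_ediff D f r t k : smooth_on D f -> D r t -> ex_diff_n f k r t.
Proof. intros H HD. exact (Ck_ex_diff D k f (H k) r t HD). Qed.

Lemma region_open T r t : region T r t -> locally_2d (region T) r t.
Proof.
  intros [Hr [Ht1 Ht2]].
  assert (Hd : 0 < Rmin r (Rmin t (T - t))).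
  { repeat apply Rmin_pos; lra. }
  exists (mkposreal _ Hd). intros u v Hu Hv. simpl in Hu, Hv.
  pose proof (Rmin_l r (Rmin t (T - t))).
  pose proof (Rmin_r r (Rmin t (T - t))).
  pose proof (Rmin_l t (T - t)). pose proof (Rmin_r t (T - t)).
  apply Rabs_lt_between in Hu. apply Rabs_lt_between in Hv.
  split; [|split]; lra.
Qed.

Lemma locally_2d_and P Q x y : locally_2d P x y -> locally_2d Q x y ->
  locally_2d (fun u v => P u v /\ Q u v) x y.
Proof.
  intros [d1 H1] [d2 H2].
  assert (Hd : 0 < Rmin d1 d2) by (apply Rmin_pos; apply cond_pos).
  exists (mkposreal _ Hd). intros u v Hu Hv; simpl in *.
  pose proof (Rmin_l d1 d2). pose proof (Rmin_r d1 d2).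
  split; [apply H1|apply H2]; lra.
Qed.

Lemma locally_2d_imp (P Q : R -> R -> Prop) x y : (forall u v, P u v -> Q u v) ->
  locally_2d P x y -> locally_2d Q x y.
Proof. intros H [d Hd]. exists d. intros u v Hu Hv. apply H, Hd; auto. Qed.

Lemma diff0 f x y a b : differential 0 f x y a b = f x y.
Proof. unfold differential. simpl. unfold partial_derive. simpl.
  unfold Binomial.C. simpl. field. Qed.
Lemma diff1 f x y a b : differential 1 f x y a b =
  Derive (fun z => f z y) x * a + Derive (fun z => f x z) y * b.
Proof. unfold differential. simpl. unfold partial_derive. simpl.
  unfold Binomial.C. simpl. field. Qed.

Lemma diff_C2 f x y : locally_2d (ex_diff_n f 2) x y ->
  differentiable_pt_lim f x y (Derive (fun z => f z y) x) (Derive (fun z => f x z) y).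
Proof.
  intros H.
  destruct (Taylor_Lagrange_2d f 1 x y H) as [D [d HD]].
  intros eps.
  assert (Hd : 0 < Rmin d (eps / (Rabs D + 1))).
  { apply Rmin_pos; [apply cond_pos|]. apply Rdiv_lt_0_compat; [apply cond_pos|].
    pose proof (Rabs_pos D); lra. }
  exists (mkposreal _ Hd). intros u v Hu Hv. simpl in Hu, Hv.
  pose proof (Rmin_l d (eps / (Rabs D + 1))) as L1.
  pose proof (Rmin_r d (eps / (Rabs D + 1))) as L2.
  specialize (HD u v ltac:(lra) ltac:(lra)).
  unfold DL_pol in HD. simpl in HD. rewrite diff0, diff1 in HD.
  set (Mx := Rmax (Rabs (u - x)) (Rabs (v - y))) in *.
  assert (HM0 : 0 <= Mx) by (unfold Mx; apply Rle_trans with (Rabs (u-x)); [apply Rabs_pos|apply Rmax_l]).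
  assert (HM1 : Mx < eps / (Rabs D + 1)).
  { unfold Mx. apply Rmax_lub_lt; lra. }
  assert (HDp : 0 <= Rabs D) by apply Rabs_pos.
  assert (HMe : Mx * (Rabs D + 1) <= eps).
  { apply Rlt_le. apply (Rmult_lt_compat_r (Rabs D + 1)) in HM1; [|lra].
    unfold Rdiv in HM1. rewrite Rmult_assoc, Rinv_l in HM1; lra. }
  eapply Rle_trans; [|apply Rmult_le_compat_r with (r := Mx); [exact HM0| exact HMe]].
  match goal with |- Rabs ?a <= _ => match type of HD with Rabs ?b <= _ =>
    replace a with b by field end end.
  eapply Rle_trans; [exact HD|].
  pose proof (Rle_abs D).
  assert (0 <= Mx * Mx) by (apply Rmult_le_pos; auto).
  nra.
Qed.

Lemma smooth_diff T f x y : smooth_on (region T) f -> region T x y ->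
  differentiable_pt_lim f x y (d_r f x y) (d_t f x y).
Proof.
  intros Hf Hxy. apply diff_C2.
  apply (locally_2d_imp (region T)); [|apply region_open; auto].
  intros u v Huv. exact (smooth_ediff _ _ _ _ 2 Hf Huv).
Qed.

Lemma smooth_schwarz T f x y : smooth_on (region T) f -> region T x y ->
  d_r (d_t f) x y = d_t (d_r f) x y.
Proof.
  intros Hf Hxy. unfold d_r, d_t. apply Schwarz.
  - apply (locally_2d_imp (region T)); [|apply region_open; auto].
    intros u v Huv.
    destruct (smooth_exd _ _ _ _ Hf Huv) as [A B].
    destruct (smooth_exd _ _ _ _ (smooth_dt _ _ Hf) Huv) as [C _].
    destruct (smooth_exd _ _ _ _ (smooth_dr _ _ Hf) Huv) as [_ E].
    repeat split; assumption.
  - exact (smooth_cont _ _ _ _ (smooth_dr _ _ (smooth_dt _ _ Hf)) Hxy).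
  - exact (smooth_cont _ _ _ _ (smooth_dt _ _ (smooth_dr _ _ Hf)) Hxy).
Qed.

Lemma curve_deriv T f psi t0 v : smooth_on (region T) f -> region T (psi t0) t0 ->
  is_derive psi t0 v ->
  is_derive (fun t => f (psi t) t) t0 (d_r f (psi t0) t0 * v + d_t f (psi t0) t0).
Proof.
  intros Hf Hr Hp. apply is_derive_Reals.
  replace (d_r f (psi t0) t0 * v + d_t f (psi t0) t0)
    with (d_r f (psi t0) t0 * v + d_t f (psi t0) t0 * 1) by ring.
  apply (derivable_pt_lim_comp_2d f psi (fun t => t)).
  - apply (smooth_diff T); auto.
  - apply is_derive_Reals; auto.
  - apply derivable_pt_lim_id.
Qed.

Lemma Rpower3 a : 0 < a -> Rpower a 3 = a ^ 3.
Proof. intros Ha. rewrite <- Rpower_pow; auto. f_equal. simpl; ring. Qed.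

Lemma loc_pos x : 0 < x -> locally x (fun s : R => 0 < s).
Proof. intros Hx. apply (open_gt 0 x Hx). Qed.

Lemma euler_pt m K T rho u x t : (m = 1%nat \/ m = 2%nat) -> 0 < K ->
  smooth_on (region T) rho -> smooth_on (region T) u ->
  (forall r t, region T r t -> 0 < rho r t) ->
  euler_radial (region T) m K 3 rho u -> region T x t ->
  d_t rho x t + u x t * d_r rho x t + rho x t * d_r u x t + INR m * rho x t * u x t / x = 0 /\
  d_t u x t + u x t * d_r u x t + 3 * K * rho x t * d_r rho x t = 0.
Proof.
  intros Hm HK Hrho Hu Hpos He Hx.
  destruct (He x t Hx) as [E1 E2].
  destruct (smooth_exd _ _ _ _ Hrho Hx) as [Rr Rt].
  destruct (smooth_exd _ _ _ _ Hu Hx) as [Ur Ut].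
  assert (Hx0 : 0 < x) by (destruct Hx; auto).
  assert (Hp : 0 < rho x t) by auto.
  assert (A : d_t (fun s τ => s ^ m * rho s τ) x t = x^m * d_t rho x t).
  { unfold d_t. apply is_derive_unique. auto_derive; auto. ring. }
  assert (B : d_r (fun s τ => s ^ m * rho s τ * u s τ) x t =
     INR m * x^(pred m) * rho x t * u x t + x^m * (d_r rho x t * u x t + rho x t * d_r u x t)).
  { unfold d_r. apply is_derive_unique. auto_derive; auto. ring. }
  assert (C : d_t (fun s τ => s ^ m * rho s τ * u s τ) x t =
     x^m * (d_t rho x t * u x t + rho x t * d_t u x t)).
  { unfold d_t. apply is_derive_unique. auto_derive; auto. ring. }
  assert (Dd : d_r (fun s τ => s ^ m * rho s τ * (u s τ)^2) x t =
     INR m * x^(pred m) * rho x t * (u x t)^2 + x^m * (d_r rho x t * (u x t)^2 + rho x t * (2 * u x t * d_r u x t))).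
  { unfold d_r. apply is_derive_unique. auto_derive; auto. ring. }
  assert (P : d_r (pressure K 3 rho) x t = 3 * K * (rho x t)^2 * d_r rho x t).
  { unfold d_r, pressure.
    rewrite (Derive_ext_loc _ (fun s => K * (rho s t)^3)).
    - apply is_derive_unique. auto_derive; auto. ring.
    - apply (filter_imp (fun s => 0 < s)); [|apply loc_pos; auto].
      intros s Hs. rewrite Rpower3; auto. apply Hpos. destruct Hx; split; auto. }
  rewrite A, B in E1. rewrite C, Dd, P in E2.
  assert (Hxm : x ^ m <> 0) by (apply pow_nonzero; lra).
  assert (F1 : d_t rho x t + u x t * d_r rho x t + rho x t * d_r u x t + INR m * rho x t * u x t / x = 0).
  { apply (Rmult_eq_reg_l (x^m)); [|auto]. rewrite Rmult_0_r. rewrite <- E1.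
    destruct Hm; subst m; simpl; field; lra. }
  split; [exact F1|].
  apply (Rmult_eq_reg_l (x^m * rho x t)); [|apply Rmult_integral_contrapositive; split; lra].
  rewrite Rmult_0_r. rewrite <- E2.
  assert (Ht : d_t rho x t = -(u x t * d_r rho x t + rho x t * d_r u x t + INR m * rho x t * u x t / x)) by lra.
  rewrite Ht.
  destruct Hm; subst m; simpl; field; lra.
Qed.

Lemma euler_r m K T rho u x t : (m = 1%nat \/ m = 2%nat) -> 0 < K ->
  smooth_on (region T) rho -> smooth_on (region T) u ->
  (forall r t, region T r t -> 0 < rho r t) ->
  euler_radial (region T) m K 3 rho u -> region T x t ->
  d_r (d_t rho) x t + 2 * d_r u x t * d_r rho x t + u x t * d_r (d_r rho) x t
    + rho x t * d_r (d_r u) x t + INR m * (d_r rho x t * u x t + rho x t * d_r u x t) / x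
    - INR m * rho x t * u x t / x ^ 2 = 0 /\
  d_r (d_t u) x t + (d_r u x t)^2 + u x t * d_r (d_r u) x t
    + 3 * K * ((d_r rho x t)^2 + rho x t * d_r (d_r rho) x t) = 0.
Proof.
  intros Hm HK Hrho Hu Hpos He Hx.
  assert (Hx0 : 0 < x) by (destruct Hx; auto).
  assert (Hloc : locally x (fun s => region T s t)).
  { apply (filter_imp (fun s => 0 < s)); [|apply loc_pos; auto].
    intros s Hs. destruct Hx; split; auto. }
  destruct (smooth_exd _ _ _ _ Hrho Hx) as [Rr _].
  destruct (smooth_exd _ _ _ _ Hu Hx) as [Ur _].
  destruct (smooth_exd _ _ _ _ (smooth_dr _ _ Hrho) Hx) as [Rrr _].
  destruct (smooth_exd _ _ _ _ (smooth_dr _ _ Hu) Hx) as [Urr _].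
  destruct (smooth_exd _ _ _ _ (smooth_dt _ _ Hrho) Hx) as [Rtr _].
  destruct (smooth_exd _ _ _ _ (smooth_dt _ _ Hu) Hx) as [Utr _].
  split.
  - assert (Z : is_derive (fun s => d_t rho s t + u s t * d_r rho s t + rho s t * d_r u s t + INR m * rho s t * u s t / s) x 0).
    { apply (is_derive_ext_loc (fun _ => 0)); [|apply (is_derive_const 0)].
      apply (filter_imp _ _ (fun s Hs => eq_sym (proj1 (euler_pt m K T rho u s t Hm HK Hrho Hu Hpos He Hs)))) , Hloc. }
    assert (L : is_derive (fun s => d_t rho s t + u s t * d_r rho s t + rho s t * d_r u s t + INR m * rho s t * u s t / s) x
      (d_r (d_t rho) x t + 2 * d_r u x t * d_r rho x t + u x t * d_r (d_r rho) x t
    + rho x t * d_r (d_r u) x t + INR m * (d_r rho x t * u x t + rho x t * d_r u x t) / x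
    - INR m * rho x t * u x t / x ^ 2)).
    { auto_derive. repeat split; auto; lra. unfold d_r. field. lra. }
    apply is_derive_unique in Z. apply is_derive_unique in L. rewrite <- L; exact Z.
  - assert (Z : is_derive (fun s => d_t u s t + u s t * d_r u s t + 3 * K * rho s t * d_r rho s t) x 0).
    { apply (is_derive_ext_loc (fun _ => 0)); [|apply (is_derive_const 0)].
      apply (filter_imp _ _ (fun s Hs => eq_sym (proj2 (euler_pt m K T rho u s t Hm HK Hrho Hu Hpos He Hs)))) , Hloc. }
    assert (L : is_derive (fun s => d_t u s t + u s t * d_r u s t + 3 * K * rho s t * d_r rho s t) x
      (d_r (d_t u) x t + (d_r u x t)^2 + u x t * d_r (d_r u) x t
    + 3 * K * ((d_r rho x t)^2 + rho x t * d_r (d_r rho) x t))).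
    { auto_derive. repeat split; auto. unfold d_r. ring. }
    apply is_derive_unique in Z. apply is_derive_unique in L. rewrite <- L; exact Z.
Qed.

Lemma is_derive_eq (f : R -> R) x l l' : is_derive f x l -> l = l' -> is_derive f x l'.
Proof. intros H <-; exact H. Qed.

Lemma alg_deriv (M c : R) (U Rh Ur Rr P : R -> R) t0 dU dR dUr dRr dP :
  is_derive U t0 dU -> is_derive Rh t0 dR -> is_derive Ur t0 dUr -> is_derive Rr t0 dRr ->
  is_derive P t0 dP -> P t0 <> 0 -> U t0 + c * Rh t0 <> 0 ->
  is_derive (fun t => Ur t + c * Rr t + M / P t * (c * Rh t * U t / (U t + c * Rh t))) t0
    (dUr + c * dRr + (- (M * dP / (P t0)^2)) * (c * Rh t0 * U t0 / (U t0 + c * Rh t0))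
     + M / P t0 * ((c * (dR * U t0 + Rh t0 * dU)) * (U t0 + c * Rh t0) - c * Rh t0 * U t0 * (dU + c * dR)) / (U t0 + c * Rh t0)^2).
Proof.
  intros HU HR HUr HRr HP HP0 HW.
  assert (EU : ex_derive U t0) by (eexists; eauto).
  assert (ER : ex_derive Rh t0) by (eexists; eauto).
  assert (EUr : ex_derive Ur t0) by (eexists; eauto).
  assert (ERr : ex_derive Rr t0) by (eexists; eauto).
  assert (EP : ex_derive P t0) by (eexists; eauto).
  auto_derive.
  - repeat split; auto.
  - replace (Derive (fun x : R => U x) t0) with dU by (symmetry; apply is_derive_unique; exact HU).
    replace (Derive (fun x : R => Rh x) t0) with dR by (symmetry; apply is_derive_unique; exact HR).
    replace (Derive (fun x : R => Ur x) t0) with dUr by (symmetry; apply is_derive_unique; exact HUr).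
    replace (Derive (fun x : R => Rr x) t0) with dRr by (symmetry; apply is_derive_unique; exact HRr).
    replace (Derive (fun x : R => P x) t0) with dP by (symmetry; apply is_derive_unique; exact HP).
    field. split; auto.
Qed.

Lemma alg (M r c K rho u rr ur rt ut rrr urr rtr utr : R) :
  c^2 = 3*K -> r <> 0 -> u + c*rho <> 0 -> u - c*rho <> 0 ->
  rt + u * rr + rho * ur + M * rho * u / r = 0 ->
  ut + u * ur + 3 * K * rho * rr = 0 ->
  rtr + 2 * ur * rr + u * rrr + rho * urr + M * (rr * u + rho * ur) / r - M * rho * u / r ^ 2 = 0 ->
  utr + ur ^ 2 + u * urr + 3 * K * (rr ^ 2 + rho * rrr) = 0 ->
  ur + c * rr + M / r * (c * rho * u / (u + c * rho)) = 0 ->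
  let w := u + c*rho in
  let dU := ur * w + ut in let dR := rr * w + rt in
  let dUr := urr * w + utr in let dRr := rrr * w + rtr in
  (dUr + c * dRr + (- (M * w / r^2)) * (c * rho * u / (u + c * rho))
     + M / r * ((c * (dR * u + rho * dU)) * (u + c * rho) - c * rho * u * (dU + c * dR)) / (u + c * rho)^2)
  = M * (u - c * rho)^2 / (2 * r * (u + c * rho)) * (ur - c * rr - M * c * rho * u / (r * (u - c * rho))).
Proof.
  intros HK Hr Hw Hz H1 H2 H3 H4 H5 w dU dR dUr dRr. unfold dU, dR, dUr, dRr, w.
  assert (Hur : ur = -c*rr-M*c*rho*u/(r*(u+c*rho))).
  { assert (M / r * (c * rho * u / (u + c * rho)) = M*c*rho*u/(r*(u+c*rho))) by (field; split; auto).
    lra. }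
  assert (Hrt : rt = -(u*rr+rho*ur+M*rho*u/r)) by lra.
  assert (Hut : ut = -(u*ur+3*K*rho*rr)) by lra.
  assert (Hrtr : rtr = -(2*ur*rr+u*rrr+rho*urr+M*(rr*u+rho*ur)/r-M*rho*u/r^2)) by lra.
  assert (Hutr : utr = -(ur^2+u*urr+3*K*(rr^2+rho*rrr))) by lra.
  clear H1 H2 H3 H4 H5.
  subst rt ut rtr utr. subst ur. replace K with (c^2/3) by lra.
  field. repeat split; auto.
Qed.

Lemma core m K T rho u c psi t0 : (m = 1%nat \/ m = 2%nat) -> 0 < K -> c^2 = 3*K ->
  smooth_on (region T) rho -> smooth_on (region T) u ->
  (forall r t, region T r t -> 0 < rho r t) ->
  euler_radial (region T) m K 3 rho u -> region T (psi t0) t0 ->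
  is_derive psi t0 (u (psi t0) t0 + c * rho (psi t0) t0) ->
  u (psi t0) t0 + c * rho (psi t0) t0 <> 0 -> u (psi t0) t0 - c * rho (psi t0) t0 <> 0 ->
  d_r u (psi t0) t0 + c * d_r rho (psi t0) t0 + INR m / psi t0 * (c * rho (psi t0) t0 * u (psi t0) t0 / (u (psi t0) t0 + c * rho (psi t0) t0)) = 0 ->
  is_derive (fun t => d_r u (psi t) t + c * d_r rho (psi t) t + INR m / psi t * (c * rho (psi t) t * u (psi t) t / (u (psi t) t + c * rho (psi t) t))) t0
    (INR m * (u (psi t0) t0 - c * rho (psi t0) t0)^2 / (2 * psi t0 * (u (psi t0) t0 + c * rho (psi t0) t0))
     * (d_r u (psi t0) t0 - c * d_r rho (psi t0) t0 - INR m * c * rho (psi t0) t0 * u (psi t0) t0 / (psi t0 * (u (psi t0) t0 - c * rho (psi t0) t0)))).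
Proof.
  intros Hm HK Hc Hrho Hu Hpos He Hx Hpsi Hw Hz H0.
  assert (Hx0 : 0 < psi t0) by (destruct Hx; auto).
  pose proof (curve_deriv T u psi t0 _ Hu Hx Hpsi) as Du.
  pose proof (curve_deriv T rho psi t0 _ Hrho Hx Hpsi) as Dr.
  pose proof (curve_deriv T (d_r u) psi t0 _ (smooth_dr _ _ Hu) Hx Hpsi) as Dur.
  pose proof (curve_deriv T (d_r rho) psi t0 _ (smooth_dr _ _ Hrho) Hx Hpsi) as Drr.
  eapply is_derive_eq.
  { apply (alg_deriv (INR m) c (fun t => u (psi t) t) (fun t => rho (psi t) t)
      (fun t => d_r u (psi t) t) (fun t => d_r rho (psi t) t) psi t0); eauto; lra. }
  destruct (euler_pt m K T rho u _ _ Hm HK Hrho Hu Hpos He Hx) as [E1 E2].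
  destruct (euler_r m K T rho u _ _ Hm HK Hrho Hu Hpos He Hx) as [E1r E2r].
  rewrite (smooth_schwarz T rho _ _ Hrho Hx) in E1r.
  rewrite (smooth_schwarz T u _ _ Hu Hx) in E2r.
  apply alg with (K := K); auto; try lra.
Qed.

Lemma deriv_right g x l e : is_derive g x l -> l <> 0 -> 0 < e ->
  exists t, x < t < x + e /\ (0 < l -> g x < g t) /\ (l < 0 -> g t < g x).
Proof.
  intros H Hl He. apply is_derive_Reals in H.
  assert (Hal : 0 < Rabs l) by (apply Rabs_pos_lt; auto).
  destruct (H (Rabs l) Hal) as [d Hd].
  set (h := Rmin d e / 2).
  assert (Hm : 0 < Rmin d e) by (apply Rmin_pos; [apply cond_pos|auto]).
  pose proof (Rmin_l d e). pose proof (Rmin_r d e).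
  assert (Hh : 0 < h) by (unfold h; lra).
  specialize (Hd h ltac:(lra) ltac:(rewrite Rabs_pos_eq; unfold h; lra)).
  exists (x + h). split; [unfold h; lra|].
  apply Rabs_lt_between in Hd.
  split; intros Hs.
  - rewrite Rabs_pos_eq in Hd by lra.
    assert (0 < (g (x + h) - g x) / h) by lra.
    assert (0 < g (x + h) - g x).
    { replace (g (x + h) - g x) with ((g (x + h) - g x) / h * h) by (field; lra).
      apply Rmult_lt_0_compat; lra. }
    lra.
  - rewrite Rabs_left in Hd by lra.
    assert ((g (x + h) - g x) / h < 0) by lra.
    assert (g (x + h) - g x < 0).
    { replace (g (x + h) - g x) with ((g (x + h) - g x) / h * h) by (field; lra).
      apply Rmult_neg_pos ; lra. }
    lra.
Qed.

Lemma hh_eq K T rho r t : (forall r t, region T r t -> 0 < rho r t) -> region T r t ->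
  hh K 3 rho r t = sqrt (K * 3) * rho r t.
Proof.
  intros Hpos Hr. unfold hh. replace ((3 - 1) / 2) with 1 by field.
  rewrite Rpower_1; auto.
Qed.

Lemma dhh_eq K T rho r t : (forall r t, region T r t -> 0 < rho r t) ->
  smooth_on (region T) rho -> region T r t ->
  d_r (hh K 3 rho) r t = sqrt (K * 3) * d_r rho r t.
Proof.
  intros Hpos Hrho Hr. unfold d_r.
  rewrite (Derive_ext_loc _ (fun s => sqrt (K * 3) * rho s t)).
  - apply is_derive_unique. destruct (smooth_exd _ _ _ _ Hrho Hr) as [E _].
    auto_derive; auto. ring.
  - apply (filter_imp (fun s => 0 < s)); [|apply loc_pos; destruct Hr; auto].
    intros s Hs. apply hh_eq with T; auto. destruct Hr; split; auto.
Qed.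

Lemma loc_time T t0 : 0 < t0 < T -> locally t0 (fun t => 0 < t < T).
Proof. intros H. apply (open_and _ _ (open_gt 0) (open_lt T)). exact H. Qed.

Lemma case_alpha m K T rho u r0 psi t0 : (m = 1%nat \/ m = 2%nat) -> 0 < K ->
  smooth_on (region T) rho -> smooth_on (region T) u ->
  (forall r t, region T r t -> 0 < rho r t) ->
  euler_radial (region T) m K 3 rho u ->
  (forall r t, region T r t -> cc1 K 3 rho u r t < 0 /\ 0 < cc2 K 3 rho u r t) ->
  char_curve T (cc2 K 3 rho u) r0 psi -> 0 < t0 < T ->
  alpha m K 3 rho u (psi t0) t0 = 0 ->
  exists k, 0 < k /\ is_derive (fun t => alpha m K 3 rho u (psi t) t) t0
     (k * beta m K 3 rho u (psi t0) t0).
Proof.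
  intros Hm HK Hrho Hu Hpos He Hsub [Hp0 [Hpp [_ Hder]]] Ht Ha.
  set (s := sqrt (K * 3)).
  assert (Hs2 : s ^ 2 = 3 * K) by (unfold s; simpl; rewrite Rmult_1_r, sqrt_sqrt; lra).
  assert (Hreg : forall t, 0 < t < T -> region T (psi t) t).
  { intros t Ht'. split; [apply Hpp; lra|auto]. }
  assert (HA : forall t, 0 < t < T -> alpha m K 3 rho u (psi t) t =
     d_r u (psi t) t + s * d_r rho (psi t) t + INR m / psi t * (s * rho (psi t) t * u (psi t) t / (u (psi t) t + s * rho (psi t) t))).
  { intros t Ht'. unfold alpha, cc2. rewrite (hh_eq K T), (dhh_eq K T); auto.
    fold s. replace (2 / (3 - 1)) with 1 by field. ring. }
  pose proof (Hreg t0 Ht) as Hx.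
  destruct (Hsub _ _ Hx) as [Hc1 Hc2].
  unfold cc1, cc2 in Hc1, Hc2. rewrite (hh_eq K T) in Hc1, Hc2 by auto. fold s in Hc1, Hc2.
  assert (Hx0 : 0 < psi t0) by (destruct Hx; auto).
  assert (Hd : is_derive psi t0 (u (psi t0) t0 + s * rho (psi t0) t0)).
  { pose proof (Hder t0 Ht) as D. unfold cc2 in D. rewrite (hh_eq K T) in D by auto. exact D. }
  pose proof (core m K T rho u s psi t0 Hm HK Hs2 Hrho Hu Hpos He Hx Hd ltac:(lra) ltac:(lra)
     ltac:(rewrite <- HA; auto)) as C.
  set (x := psi t0) in *.
  exists (INR m * (u x t0 - s * rho x t0) ^ 2 / (2 * x * (u x t0 + s * rho x t0))).
  assert (HM : 0 < INR m) by (destruct Hm; subst m; simpl; lra).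
  split.
  - assert (Hz2 : 0 < (u x t0 - s * rho x t0)^2) by nra. apply Rdiv_lt_0_compat; [apply Rmult_lt_0_compat; auto|]. assert (0 < 2 * x) by lra. nra.
  - eapply is_derive_eq.
    + eapply is_derive_ext_loc; [|exact C].
      apply (filter_imp (fun t => 0 < t < T)); [|apply loc_time; auto].
      intros t Ht'. symmetry. apply HA; auto.
    + f_equal. unfold beta, cc1. rewrite (hh_eq K T), (dhh_eq K T); auto. fold s.
      replace (2 / (3 - 1)) with 1 by field. field. split; lra.
Qed.

Lemma case_beta m K T rho u r0 psi t0 : (m = 1%nat \/ m = 2%nat) -> 0 < K ->
  smooth_on (region T) rho -> smooth_on (region T) u ->
  (forall r t, region T r t -> 0 < rho r t) ->
  euler_radial (region T) m K 3 rho u ->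
  (forall r t, region T r t -> cc1 K 3 rho u r t < 0 /\ 0 < cc2 K 3 rho u r t) ->
  char_curve T (cc1 K 3 rho u) r0 psi -> 0 < t0 < T ->
  beta m K 3 rho u (psi t0) t0 = 0 ->
  exists k, k < 0 /\ is_derive (fun t => beta m K 3 rho u (psi t) t) t0
     (k * alpha m K 3 rho u (psi t0) t0).
Proof.
  intros Hm HK Hrho Hu Hpos He Hsub [Hp0 [Hpp [_ Hder]]] Ht Ha.
  set (s := sqrt (K * 3)).
  assert (Hs2 : (-s) ^ 2 = 3 * K) by (replace ((-s)^2) with (s^2) by ring; unfold s; simpl; rewrite Rmult_1_r, sqrt_sqrt; lra).
  assert (Hreg : forall t, 0 < t < T -> region T (psi t) t).
  { intros t Ht'. split; [apply Hpp; lra|auto]. }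
  assert (HB : forall t, 0 < t < T -> beta m K 3 rho u (psi t) t =
     d_r u (psi t) t + (-s) * d_r rho (psi t) t + INR m / psi t * ((-s) * rho (psi t) t * u (psi t) t / (u (psi t) t + (-s) * rho (psi t) t))).
  { intros t Ht'. unfold beta, cc1. rewrite (hh_eq K T), (dhh_eq K T); auto.
    fold s. replace (2 / (3 - 1)) with 1 by field.
    replace (u (psi t) t + - s * rho (psi t) t) with (u (psi t) t - s * rho (psi t) t) by ring.
    unfold Rdiv. ring. }
  pose proof (Hreg t0 Ht) as Hx.
  destruct (Hsub _ _ Hx) as [Hc1 Hc2].
  unfold cc1, cc2 in Hc1, Hc2. rewrite (hh_eq K T) in Hc1, Hc2 by auto. fold s in Hc1, Hc2.
  assert (Hx0 : 0 < psi t0) by (destruct Hx; auto).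
  assert (Hd : is_derive psi t0 (u (psi t0) t0 + (-s) * rho (psi t0) t0)).
  { pose proof (Hder t0 Ht) as D. unfold cc1 in D. rewrite (hh_eq K T) in D by auto.
    fold s in D. replace (u (psi t0) t0 + - s * rho (psi t0) t0) with (u (psi t0) t0 - s * rho (psi t0) t0) by ring.
    exact D. }
  pose proof (core m K T rho u (-s) psi t0 Hm HK Hs2 Hrho Hu Hpos He Hx Hd ltac:(lra) ltac:(lra)
     ltac:(rewrite <- HB; auto)) as C.
  set (x := psi t0) in *.
  exists (INR m * (u x t0 - (-s) * rho x t0) ^ 2 / (2 * x * (u x t0 + (-s) * rho x t0))).
  assert (HM : 0 < INR m) by (destruct Hm; subst m; simpl; lra).
  split.
  - unfold Rdiv. apply Rmult_pos_neg.
    + apply Rmult_lt_0_compat; auto; apply pow_lt; lra.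
    + apply Rinv_lt_0_compat. assert (0 < 2 * x) by lra. nra.
  - eapply is_derive_eq.
    + eapply is_derive_ext_loc; [|exact C].
      apply (filter_imp (fun t => 0 < t < T)); [|apply loc_time; auto].
      intros t Ht'. symmetry. apply HB; auto.
    + f_equal. unfold alpha, cc2. rewrite (hh_eq K T), (dhh_eq K T); auto. fold s.
      replace (2 / (3 - 1)) with 1 by field. field. split; lra.
Qed.

Theorem mainTheorem4 (m : nat) (K T : R) (rho u : R -> R -> R) :
  (m = 1%nat \/ m = 2%nat) -> 0 < K -> 0 < T ->
  smooth_on (region T) rho -> smooth_on (region T) u ->
  (forall r t, region T r t -> 0 < rho r t) ->
  euler_radial (region T) m K 3 rho u ->
  (forall r t, region T r t ->
     cc1 K 3 rho u r t < 0 /\ 0 < cc2 K 3 rho u r t) ->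
  forall (tstar eps : R), 0 < eps -> 0 < tstar - eps -> tstar + eps < T ->
  (* (i) 1-wave R: no R-to-C change of the 2-wave *)
  (forall r0 psi, char_curve T (cc2 K 3 rho u) r0 psi ->
     beta m K 3 rho u (psi tstar) tstar > 0 ->
     ~ change_pos_to_neg (fun t => alpha m K 3 rho u (psi t) t) tstar eps) /\
  (* (ii) 1-wave C: no C-to-R change of the 2-wave *)
  (forall r0 psi, char_curve T (cc2 K 3 rho u) r0 psi ->
     beta m K 3 rho u (psi tstar) tstar < 0 ->
     ~ change_neg_to_pos (fun t => alpha m K 3 rho u (psi t) t) tstar eps) /\
  (* (iii) 2-wave R: no C-to-R change of the 1-wave *)
  (forall r0 xi, char_curve T (cc1 K 3 rho u) r0 xi ->
     alpha m K 3 rho u (xi tstar) tstar > 0 ->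
     ~ change_neg_to_pos (fun t => beta m K 3 rho u (xi t) t) tstar eps) /\
  (* (iv) 2-wave C: no R-to-C change of the 1-wave *)
  (forall r0 xi, char_curve T (cc1 K 3 rho u) r0 xi ->
     alpha m K 3 rho u (xi tstar) tstar < 0 ->
     ~ change_pos_to_neg (fun t => beta m K 3 rho u (xi t) t) tstar eps).
Proof.
  intros Hm HK HT Hrho Hu Hpos He Hsub tstar eps Heps Ht1 Ht2.
  assert (Ht : 0 < tstar < T) by lra.
  repeat split.
  - intros r0 psi Hc Hb [H0 [_ Ha]].
    destruct (case_alpha m K T rho u r0 psi tstar Hm HK Hrho Hu Hpos He Hsub Hc Ht H0) as [k [Hk D]].
    destruct (deriv_right _ _ _ eps D ltac:(nra) Heps) as [t [Htt [P _]]].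
    specialize (Ha t Htt). simpl in *. rewrite H0 in P. specialize (P ltac:(nra)). lra.
  - intros r0 psi Hc Hb [H0 [_ Ha]].
    destruct (case_alpha m K T rho u r0 psi tstar Hm HK Hrho Hu Hpos He Hsub Hc Ht H0) as [k [Hk D]].
    destruct (deriv_right _ _ _ eps D ltac:(nra) Heps) as [t [Htt [_ P]]].
    specialize (Ha t Htt). simpl in *. rewrite H0 in P. specialize (P ltac:(nra)). lra.
  - intros r0 psi Hc Hb [H0 [_ Ha]].
    destruct (case_beta m K T rho u r0 psi tstar Hm HK Hrho Hu Hpos He Hsub Hc Ht H0) as [k [Hk D]].
    destruct (deriv_right _ _ _ eps D ltac:(nra) Heps) as [t [Htt [_ P]]].
    specialize (Ha t Htt). simpl in *. rewrite H0 in P. specialize (P ltac:(nra)). lra.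
  - intros r0 psi Hc Hb [H0 [_ Ha]].
    destruct (case_beta m K T rho u r0 psi tstar Hm HK Hrho Hu Hpos He Hsub Hc Ht H0) as [k [Hk D]].
    destruct (deriv_right _ _ _ eps D ltac:(nra) Heps) as [t [Htt [P _]]].
    specialize (Ha t Htt). simpl in *. rewrite H0 in P. specialize (P ltac:(nra)). lra.
Qed.
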